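(* Let $m,n\in\mathbb{N}$ and $\epsilon>0$. Let $\alpha\in\mathbb{Z}_n$ and $f=\chi_\alpha:\mathbb{Z}_n\to\mathbb{C}$. Let $\ell:=\min(n,m)$ and let $g:\mathbb{Z}_m\to\mathbb{C}$ be defined by $g(x)=f(x)$ for $0\le x<\ell$ and $g(x)=0$ otherwise. Let $r=1/(2\epsilon)$ and $\Gamma'=\{\beta\in\mathbb{Z}_m: |\frac mn\alpha-\beta|_m\le r+1\}$. Then $\|g-g|_{\Gamma'}\|_2^2\le\epsilon$.
   Context: $\mathbb{Z}_n=\{0,\dots,n-1\}$ with addition mod $n$; elements are treated as these integer representatives. $\chi_{\alpha}(x)=\exp(2\pi i\alpha x/n)$ on $\mathbb{Z}_n$, and $\chi_{\beta,m}(x)=\exp(2\pi i\beta x/m)$ on $\mathbb{Z}_m$. On $\mathbb{Z}_m$: $\langle h_1,h_2\rangle=\frac1m\sum_x h_1(x)\overline{h_2(x)}$, $\|h\|_2^2=\langle h,h\rangle$, $\widehat h(\beta)=\langle h,\chi_{\beta,m}\rangle$, and for $\Gamma'\subseteq\mathbb{Z}_m$, $h|_{\Gamma'}=\sum_{\beta\in\Gamma'}\widehat h(\beta)\chi_{\beta,m}$. For $k\in\mathbb{N}$, $x\in\mathbb{R}$: $|x|_k=\min\{|x-kz|:z\in\mathbb{Z}\}$. *)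

(* Defs.v *)
From mathcomp Require Import all_boot all_order all_algebra.
From mathcomp Require Import complex.
From mathcomp Require Import boolp classical_sets reals trigo.
Set Implicit Arguments. Unset Strict Implicit. Unset Printing Implicit Defensive.
Import Order.TTheory GRing.Theory Num.Theory.
Local Open Scope ring_scope.
Local Open Scope complex_scope.

Section Defs.
Variable R : realType.

Definition expi (t : R) : R[i] := (cos t) +i* (sin t).

Definition chi (k : nat) (beta x : nat) : R[i] :=
  expi (2 * pi * beta%:R * x%:R / k%:R).

Definition dotZ (m : nat) (h1 h2 : 'I_m -> R[i]) : R[i] :=
  (m%:R)^-1 * \sum_(x < m) h1 x * (h2 x)^*.

Definition norm2sq (m : nat) (h : 'I_m -> R[i]) : R[i] := dotZ h h.

Definition fourier (m : nat) (h : 'I_m -> R[i]) (beta : 'I_m) : R[i] :=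
  dotZ h (fun x => chi m beta x).

Definition restrG (m : nat) (h : 'I_m -> R[i]) (G : pred 'I_m) : 'I_m -> R[i] :=
  fun x => \sum_(beta < m | G beta) fourier h beta * chi m beta x.

Definition distk (k : nat) (x : R) : R :=
  inf [set `|x - k%:R * z%:~R| | z in [set: int]]%classic.

End Defs.

(* Main.v *)
Require Import Defs.
From mathcomp Require Import all_boot all_order all_algebra.
From mathcomp Require Import complex.
From mathcomp Require Import boolp classical_sets reals trigo.
Import Order.TTheory GRing.Theory Num.Theory.
Local Open Scope ring_scope.
Local Open Scope complex_scope.

From mathcomp Require topology normedtype derive interval_inference.
From mathcomp Require ring lra zify.

Module H.
Import topology normedtype derive interval_inference.
Import ring lra zify.
Set Implicit Arguments. Unset Strict Implicit. Unset Printing Implicit Defensive.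
Import Order.TTheory GRing.Theory Num.Theory numFieldNormedType.Exports.
Local Open Scope classical_set_scope.
Local Open Scope ring_scope.
Local Open Scope complex_scope.

Section S.
Variable R : realType.
Local Notation C := (R[i]).
Definition nrm2 (z : C) : R := complex.Re z ^+ 2 + complex.Im z ^+ 2.

Lemma mulJ (z : C) : z * z^* = (nrm2 z)%:C.
Proof. case: z => a b; rewrite /nrm2 /=. simpc. apply/eqP; rewrite eq_complex /=; apply/andP; split; apply/eqP; ring. Qed.

Lemma nrm2_ge0 z : 0 <= nrm2 z.
Proof. by rewrite /nrm2 addr_ge0 // sqr_ge0. Qed.

Lemma nrm2M z w : nrm2 (z * w) = nrm2 z * nrm2 w.
Proof. case: z => a b; case: w => c d; rewrite /nrm2 /=. ring. Qed.

Lemma nrm2R (x : R) : nrm2 x%:C = x ^+ 2.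
Proof. rewrite /nrm2 /=; ring. Qed.

Lemma expiD a b : expi (a + b) = expi a * expi b :> C.
Proof. rewrite /expi sinD cosD. simpc. apply/eqP; rewrite eq_complex /=; apply/andP; split; apply/eqP; ring. Qed.

Lemma expi0 : expi 0 = 1 :> C.
Proof. by rewrite /expi sin0 cos0. Qed.

Lemma expiN a : expi (- a) = Num.conj (expi a) :> C.
Proof. by rewrite /expi sinN cosN. Qed.

Lemma expiMn a k : expi (a *+ k) = expi a ^+ k :> C.
Proof. elim: k => [|k IH]; first by rewrite mulr0n expi0 expr0.
by rewrite mulrS expiD IH exprS. Qed.

Lemma expi2pi_nat k : expi (2 * pi * k%:R) = 1 :> C.
Proof.
have -> : 2 * pi * k%:R = (pi *+ 2) *+ k :> R by rewrite -mulr_natr -(mulr_natr pi); ring.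
by rewrite expiMn /expi cos2pi sin2pi expr1n.
Qed.

Lemma nrm2_expi_sub1 b : nrm2 (expi b - 1) = 4 * sin (b / 2) ^+ 2.
Proof.
rewrite /nrm2 /expi /=.
have hb : b = (b / 2) *+ 2 by rewrite -mulr_natr mulfVK // pnatr_eq0.
rewrite {1 2}hb cos_mulr2n sin_mulr2n cos2sin2.
set s := sin (b/2); set c := cos (b/2).
transitivity (4 * s ^+ 2 * (c ^+ 2 + s ^+ 2)); first ring.
by rewrite cos2Dsin2 mulr1.
Qed.

Lemma chiC m a b : chi R m a b = chi R m b a.
Proof. by rewrite /chi [2 * pi * _ * _]mulrAC. Qed.

Lemma chi_mul (m k a b : nat) :
  chi R m k a * (chi R m k b)^* = expi (2 * pi * (a%:R - b%:R) / m%:R) ^+ k.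
Proof.
rewrite /chi -expiN -expiD -expiMn; congr expi; rewrite -mulr_natr; move: (@pi R) => p; ring.
Qed.

Lemma sin_ne0 (t : R) : - pi < t < pi -> t != 0 -> sin t != 0.
Proof.
move=> /andP[h1 h2] t0.
have [tn|tp] := ltP t 0.
- rewrite -oppr_eq0 -sinN; apply: lt0r_neq0; apply: sin_gt0_pi.
  by rewrite oppr_gt0 tn ltrNl.
- apply: lt0r_neq0; apply: sin_gt0_pi; by rewrite lt_neqAle eq_sym t0 tp h2.
Qed.

Lemma orth (m : nat) (a b : 'I_m) :
  \sum_(k < m) chi R m k a * (chi R m k b)^* = (a == b)%:R * m%:R.
Proof.
under eq_bigr do rewrite chi_mul.
have m0 : (0 < m)%N by case: m a b => [[]|].
have mR : (m%:R : R) != 0 by rewrite pnatr_eq0 -lt0n.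
have pi0 := pi_gt0 R.
case: eqP => [->|nab].
  rewrite subrr mulr0 mul0r expi0 mul1r.
  under eq_bigr do rewrite expr1n.
  by rewrite sumr_const card_ord.
set u := expi _.
have um : u ^+ m = 1.
  rewrite /u -expiMn.
  have -> : (2 * pi * (a%:R - b%:R) / m%:R) *+ m = 2 * pi * a%:R + - (2 * pi * b%:R) :> R.
    rewrite -mulr_natr; move: pi0 mR; move: (@pi R) (m%:R : R) => p M p0 M0; field.
    exact: M0.
  by rewrite expiD expiN !expi2pi_nat rmorph1 mulr1.
have u1 : u - 1 != 0.
  apply/negP => /eqP u10.
  have := nrm2_expi_sub1 (2 * pi * (a%:R - b%:R) / m%:R).
  rewrite -/u u10 /nrm2 /= expr0n /= addr0 => /esym /eqP.
  rewrite mulf_eq0 sqrf_eq0 pnatr_eq0 /=; apply/negP; apply: sin_ne0.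
  - have -> : 2 * pi * (a%:R - b%:R) / m%:R / 2 = pi * ((a%:R - b%:R) / m%:R) :> R.
      by move: pi0 mR; move: (@pi R) (m%:R : R) => p M p0 M0; field; exact: M0.
    have hab : `|(a%:R - b%:R) / m%:R| < 1 :> R.
      rewrite normrM normfV (ger0_norm (ler0n _ m)) ltr_pdivrMr ?ltr0n // mul1r.
      have [ab|ab] := leP (a : nat) b.
        rewrite distrC ger0_norm ?subr_ge0 ?ler_nat // -natrB // ltr_nat.
        exact: leq_ltn_trans (leq_subr _ _) (ltn_ord b).
      rewrite ger0_norm; last by rewrite subr_ge0 ler_nat ltnW.
      rewrite -natrB; last exact: ltnW.
      rewrite ltr_nat.
      exact: leq_ltn_trans (leq_subr _ _) (ltn_ord a).
    move: hab; rewrite ltr_norml => /andP[h1 h2].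
    apply/andP; split.
      by rewrite -(mulrN1 pi) ltr_pM2l.
    by rewrite -[X in _ < X]mulr1 ltr_pM2l.
  - rewrite !mulf_neq0 ?invr_eq0 ?pnatr_eq0 -?lt0n ?(lt0r_neq0 pi0) //.
    rewrite subr_eq0 eqr_nat; apply/eqP => abn.
    by apply: nab; apply: val_inj.
apply/eqP; rewrite mul0r -(mulrI_eq0 _ (GRing.lregP u1)) -subrX1 um subrr.
by [].
Qed.
End S.

Section S2.
Variable R : realType.

Lemma hder (k t : R) : is_derive t 1 (fun x => sin x - k * x) (cos t - k).
Proof.
by apply: is_derive_eq; rewrite [k%:A]mulr1.
Qed.

Lemma cos_le_mono (x y : R) : 0 <= x -> x <= y -> y <= pi -> cos y <= cos x.
Proof.
move=> x0 xy ypi; rewrite leNgt ltr_cos ?in_itv /= ?x0 ?(le_trans x0 xy) ?ypi ?(le_trans xy ypi) //.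
by rewrite -leNgt.
Qed.

Lemma jordan (x : R) : 0 <= x <= pi / 2 -> 2 / pi * x <= sin x.
Proof.
move=> /andP[xg0 xp].
set k : R := 2 / pi.
have pi0 := pi_gt0 R.
have k01 : 0 <= k <= 1.
  rewrite /k divr_ge0 ?ler_pdivrMr ?mul1r ?(ltW pi0) ?pi_ge2 //. 
set h := fun x : R => sin x - k * x.
have hd : forall t : R, is_derive t (1:R) h (cos t - k) by move=> t; exact: hder.
have hc : forall a b : R, {within `[a, b], continuous h}.
  move=> a b; apply: derivable_within_continuous => t _; exact: ex_derive.
have hpi : h (pi / 2) = 0.
  rewrite /h sin_pihalf /k; move: pi0; move: (@pi R) => p p0; field; exact: lt0r_neq0.
set x0 := acos k.
have cx0 : cos x0 = k by rewrite /x0 acosK // in_itv /=; lra.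
have x00 : 0 <= x0 by apply: acos_ge0; lra.
have x0pi : x0 <= pi by apply: acos_lepi; lra.
suff : 0 <= h x by rewrite /h subr_ge0.
have [xx0|x0x] := leP x x0.
- have [c ci e] := MVT_segment xg0 (fun t _ => hd t) (hc 0 x).
  move: ci; rewrite in_itv /= => /andP[c0 cx].
  have : h x - h 0 >= 0.
    rewrite e mulr_ge0 // ?subr_ge0 //.
    rewrite -cx0; apply: cos_le_mono => //; exact: le_trans cx xx0.
  by rewrite /h /= sin0 mulr0 subr0 subr_ge0.
- have [c ci e] := MVT_segment xp (fun t _ => hd t) (hc x (pi/2)).
  move: ci; rewrite in_itv /= => /andP[xc cp].
  have : h (pi/2) - h x <= 0.
    rewrite e mulr_le0_ge0 // ?subr_ge0 // subr_le0.
    rewrite -cx0; apply: cos_le_mono => //; first exact: ltW (lt_le_trans x0x xc).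
    apply: (le_trans cp); lra.
  by rewrite hpi sub0r oppr_le0.
Qed.


Lemma sin_lb (m v M : R) : 0 < m -> 0 <= v -> v <= m -> M <= v -> M <= m - v ->
  2 * M / m <= sin (pi * v / m).
Proof.
move=> m0 v0 vm Mv Mmv.
have pi0 := pi_gt0 R.
have [h|h] := leP (pi * v / m) (pi / 2).
- apply: le_trans (jordan _); last first.
    by rewrite h andbT divr_ge0 ?mulr_ge0 // ?ltW.
  have -> : 2 / pi * (pi * v / m) = 2 * v / m.
    move: pi0; move: (@pi R) => p p0; field; apply/andP; split; exact: lt0r_neq0.
  by rewrite ler_pM2r ?invr_gt0 // ler_pM2l.
- have -> : pi * v / m = pi - pi * (m - v) / m.
    move: pi0; move: (@pi R) => p p0; field; exact: lt0r_neq0.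
  rewrite sinB sinpi cospi mul0r sub0r mulN1r opprK.
  have h' : pi * (m - v) / m <= pi / 2.
    move: h; move: pi0; move: (@pi R) => p p0 h.
    have -> : p * (m - v) / m = p - p * v / m by field; exact: lt0r_neq0.
    lra.
  apply: le_trans (jordan _); last first.
    by rewrite h' andbT divr_ge0 ?mulr_ge0 ?subr_ge0 // ?ltW.
  have -> : 2 / pi * (pi * (m - v) / m) = 2 * (m - v) / m.
    move: pi0; move: (@pi R) => p p0; field; apply/andP; split; exact: lt0r_neq0.
  by rewrite ler_pM2r ?invr_gt0 // ler_pM2l.
Qed.

Definition psi (Rb y : R) : R := if Rb < y then (y ^+ 2)^-1 else 0.

Lemma psi_ge0 Rb y : 0 <= psi Rb y.
Proof. by rewrite /psi; case: ifP => // _; rewrite invr_ge0 sqr_ge0. Qed.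

Lemma inv_step (y : R) : 1/2 < y -> (y ^+ 2)^-1 + (y + 1/2)^-1 <= (y - 1/2)^-1.
Proof.
move=> hy.
have y0 : y != 0 by apply: lt0r_neq0; lra.
have y1 : y - 1/2 != 0 by apply: lt0r_neq0; lra.
have y2 : y + 1/2 != 0 by apply: lt0r_neq0; lra.
rewrite -subr_ge0.
have -> : (y - 1/2)^-1 - ((y ^+ 2)^-1 + (y + 1/2)^-1) =
   (4 * y ^+ 2 * (y - 1/2) * (y + 1/2))^-1.
  field; rewrite y0 andbT; apply/andP; split; apply: lt0r_neq0; lra.
rewrite invr_ge0 !mulr_ge0 ?sqr_ge0 //; lra.
Qed.

Lemma psi_sum (Rb : R) N : 1/2 < Rb -> forall y,
  \sum_(k < N) psi Rb (y + k%:R) <= (Num.max y Rb - 1/2)^-1.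
Proof.
move=> hR; elim: N => [|N IH] y.
  by rewrite big_ord0 invr_ge0 subr_ge0 le_max; apply/orP; right; lra.
rewrite big_ord_recl /= addr0.
under eq_bigr => i _ do rewrite /bump /= add1n mulrS addrA.
apply: le_trans (lerD (lexx _) (IH (y + 1))) _.
rewrite /psi; case: ifP => hy.
- rewrite !max_l; try lra.
  have -> : y + 1 - 1/2 = y + 1/2 by lra.
  apply: inv_step; lra.
- rewrite add0r (max_r (x := y) (y := Rb)); last by rewrite leNgt hy.
  rewrite lef_pV2 ?posrE; try lra.
  + by rewrite lerD2r le_max lexx orbT.
  + rewrite subr_gt0; apply: lt_le_trans hR _; by rewrite le_max lexx orbT.
Qed.
End S2.

Section M.
Variable R : realType.

Lemma reindex_shift (m : nat) (hm : (0 < m)%N) (z0 : nat) :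
  exists kk : 'I_m -> nat, [/\ (forall b, kk b < m)%N,
    (forall b : 'I_m, (kk b + b) %% m = z0 %% m)%N &
    (forall P : nat -> R, \sum_(b < m) P (kk b) = \sum_(k < m) P k)].
Proof.
case: m hm => // m' _.
have hinj : injective (fun b : 'I_m'.+1 => inZp z0 - b).
  by move=> x y /addrI /oppr_inj.
exists (fun b => val (inZp z0 - b : 'I_m'.+1)); split.
- by move=> b; exact: ltn_ord.
- move=> b; have := congr1 val (subrK b (inZp z0 : 'I_m'.+1)).
  by rewrite /= => ->.
- by move=> P; rewrite [RHS](reindex_inj hinj).
Qed.

Lemma expiNc (a : R) : expi (- a) = conjc (expi a).
Proof. exact: expiN. Qed.

Lemma sin2_shiftn (x : R) (k : nat) : sin (x + pi * k%:R) ^+ 2 = sin x ^+ 2.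
Proof.
elim: k => [|k IH]; first by rewrite mulr0 addr0.
by rewrite -natr1 mulrDr mulr1 addrA sinDpi sqrrN IH.
Qed.

Lemma sin2_shift (x : R) (z : int) : sin (x + pi * z%:~R) ^+ 2 = sin x ^+ 2.
Proof.
case: z => k; first exact: sin2_shiftn.
rewrite NegzE mulrNz mulrN -[in RHS](subrK (pi * (k.+1)%:R) x) sin2_shiftn.
by [].
Qed.

Lemma F_bound (m n : nat) (hm : (0 < m)%N) (alpha : 'I_n) (l : nat) (hl : (l <= m)%N)
  (beta : 'I_m) (v M : R) (z : int) :
  m%:R / n%:R * (alpha : nat)%:R - (beta : nat)%:R = v + m%:R * z%:~R ->
  0 <= v -> v <= m%:R -> 0 < M -> M <= v -> M <= m%:R - v ->
  nrm2 (fourier (fun x : 'I_m => if (x < l)%N then chi R n alpha x else 0) beta)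
    <= (M ^+ 2)^-1 / 4.
Proof.
move=> ec v0 vm M0 Mv Mmv.
have hn : (n%:R : R) != 0 by rewrite pnatr_eq0; case: n alpha {ec} => [[]|].
have hmR : (m%:R : R) != 0 by rewrite pnatr_eq0 -lt0n.
have pi0 := pi_gt0 R.
set a : R := 2 * pi * (alpha : nat)%:R / n%:R - 2 * pi * (beta : nat)%:R / m%:R.
set w : R[i] := expi a.
have eF : fourier (fun x : 'I_m => if (x < l)%N then chi R n alpha x else 0) beta
    = ((m%:R)^-1)%:C * \sum_(x < l) w ^+ x.
  rewrite /fourier /dotZ fmorphV rmorph_nat; congr (_ * _).
  rewrite (big_ord_widen m (fun x => w ^+ x) hl) [RHS]big_mkcond /=.
  apply: eq_bigr => x _; case: ifP => _; last by rewrite mul0r.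
  rewrite /chi /w -[Num.conj _]/(conjc _) -expiNc -expiD -expiMn; congr expi.
  rewrite -[_ *+ (x : nat)]mulr_natr /a; move: (@pi R) => p; ring.
set S := \sum_(x < l) w ^+ x.
rewrite eF nrm2M nrm2R.
have hS : nrm2 S * nrm2 (w - 1) <= 4.
  rewrite mulrC -nrm2M -subrX1 /w -expiMn nrm2_expi_sub1 sin2cos2.
  have := sqr_ge0 (cos (a *+ l / 2)); set q := cos _ ^+ 2; lra.
have hw : nrm2 (w - 1) = 4 * sin (pi * v / m%:R) ^+ 2.
  rewrite /w nrm2_expi_sub1.
  have -> : a / 2 = pi * v / m%:R + pi * z%:~R.
    have ev : v = m%:R / n%:R * (alpha : nat)%:R - (beta : nat)%:R - m%:R * z%:~R.
      by rewrite ec addrK.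
    rewrite /a ev; move: pi0; move: (@pi R) => p _; field.
    by rewrite hn hmR.
  by rewrite sin2_shift.
have hs : 2 * M / m%:R <= sin (pi * v / m%:R).
  by apply: sin_lb => //; rewrite ltr0n.
set s := sin (pi * v / m%:R) in hw hs.
set q := 2 * M / m%:R in hs.
have q0 : 0 < q by rewrite /q divr_gt0 ?mulr_gt0 ?ltr0n.
have hq : q ^+ 2 <= s ^+ 2 by rewrite !expr2 ler_pM // ltW.
have h1 : nrm2 S * q ^+ 2 <= 1.
  apply: le_trans (ler_wpM2l (nrm2_ge0 S) hq) _.
  move: hS; rewrite hw mulrCA; set X := nrm2 S * _; lra.
have h2 : nrm2 S <= (q ^+ 2)^-1.
  by rewrite -[(q ^+ 2)^-1]mul1r ler_pdivlMr ?exprn_gt0.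
apply: le_trans (ler_wpM2l _ h2) _; first by rewrite sqr_ge0.
rewrite /q; move: M0 hmR; move: (m%:R : R) => mm M0 hmm.
rewrite le_eqVlt; apply/orP; left; apply/eqP; field.
by rewrite hmm (lt0r_neq0 M0).
Qed.

Lemma inversion (m : nat) (hm : (0 < m)%N) (g : 'I_m -> R[i]) (x : 'I_m) :
  \sum_(b < m) fourier g b * chi R m b x = g x.
Proof.
have hmC : (m%:R : R[i]) != 0 by rewrite pnatr_eq0 -lt0n.
rewrite /fourier /dotZ.
under eq_bigr do rewrite -mulrA big_distrl /=.
rewrite -big_distrr /= exchange_big /=.
have e : forall y : 'I_m, \sum_(b < m) g y * Num.conj (chi R m b y) * chi R m b x
    = g y * ((x == y)%:R * m%:R).
  move=> y; rewrite -orth big_distrr /=; apply: eq_bigr => b _.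
  by rewrite -mulrA [X in _ * X]mulrC.
under eq_bigr do rewrite e.
rewrite (bigD1 x) //= eqxx mul1r big1 ?addr0; last first.
  by move=> y yx; rewrite eq_sym (negbTE yx) mul0r mulr0.
by rewrite mulrCA mulVf // mulr1.
Qed.

Lemma norm_expand (m : nat) (hm : (0 < m)%N) (G : 'I_m -> R[i]) :
  dotZ (fun x : 'I_m => \sum_(b < m) G b * chi R m b x) (fun x : 'I_m => \sum_(b < m) G b * chi R m b x)
  = \sum_(b < m) G b * Num.conj (G b).
Proof.
have hmC : (m%:R : R[i]) != 0 by rewrite pnatr_eq0 -lt0n.
rewrite /dotZ.
have e1 : forall x : 'I_m, (\sum_(b < m) G b * chi R m b x) *
    Num.conj (\sum_(b < m) G b * chi R m b x) = \sum_(b < m) \sum_(c < m)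
    (G b * Num.conj (G c)) * (chi R m x b * Num.conj (chi R m x c)).
  move=> x; rewrite rmorph_sum big_distrl /=; apply: eq_bigr => b _.
  rewrite big_distrr /=; apply: eq_bigr => c _.
  rewrite rmorphM /= [chi R m b x]chiC [chi R m c x]chiC; ring.
under eq_bigr do rewrite e1.
rewrite exchange_big /=; under eq_bigr do rewrite exchange_big /=.
under eq_bigr do under eq_bigr do rewrite -big_distrr /= orth.
have e2 : forall b : 'I_m, \sum_(c < m) G b * Num.conj (G c) * ((b == c)%:R * m%:R)
    = G b * Num.conj (G b) * m%:R.
  move=> b; rewrite (bigD1 b) //= eqxx mul1r big1 ?addr0 //.
  by move=> c cb; rewrite eq_sym (negbTE cb) mul0r mulr0.
under eq_bigr do rewrite e2.
by rewrite -big_distrl /= mulrCA mulVf // mulr1.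
Qed.

Lemma distk_le (m : nat) (t : R) (zz : int) : distk m t <= `|t - m%:R * zz%:~R|.
Proof.
apply: ge_inf; last by exists zz.
by exists 0 => y [z' _ <-].
Qed.
End M.


Lemma main_prop (R : realType) (m n : nat) (eps : R)
  (hm : (0 < m)%N) (heps : 0 < eps) (alpha : 'I_n) :
  let f : nat -> R[i] := fun x => chi R n alpha x in
  let l := minn n m in
  let g : 'I_m -> R[i] := fun x => if (x < l)%N then f x else 0 in
  let r : R := 1 / (2 * eps) in
  let Gamma' : pred 'I_m := fun beta =>
    distk m (m%:R / n%:R * (alpha : nat)%:R - (beta : nat)%:R) <= r + 1 in
  norm2sq (fun x => g x - restrG g Gamma' x) <= eps%:C.
Proof.
cbv zeta.
set l := minn n m.
set g := fun x : 'I_m => if (x < l)%N then chi R n alpha x else 0.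
set r : R := 1 / (2 * eps).
set Gamma' := fun beta : 'I_m => distk m (m%:R / n%:R * (alpha : nat)%:R - (beta : nat)%:R) <= r + 1.
set F := fourier g.
set G := fun b : 'I_m => if Gamma' b then 0 else F b.
have eh : (fun x => g x - restrG g Gamma' x) = (fun x => \sum_(b < m) G b * chi R m b x).
  apply: funext => x.
  rewrite -{1}(inversion hm g x) /restrG [X in _ - X]big_mkcond /= -sumrB.
  apply: eq_bigr => b _; rewrite /G /F; case: ifP => _; first by rewrite subrr mul0r.
  by rewrite subr0.
rewrite /norm2sq eh norm_expand //.
under eq_bigr do rewrite mulJ.
rewrite -rmorph_sum lecR.
set c : R := m%:R / n%:R * (alpha : nat)%:R.
have c0 : 0 <= c by rewrite /c !mulr_ge0 ?invr_ge0 ?ler0n.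
set z0 := Num.truncn c.
have /andP[z0le z0lt] := truncn_itv c0.
rewrite -/z0 in z0le z0lt.
set th : R := c - z0%:R.
have th0 : 0 <= th by rewrite /th subr_ge0.
have th1 : th < 1 by rewrite /th; move: z0lt; rewrite -natr1; lra.
have r0 : 0 < r by rewrite /r divr_gt0 ?mulr_gt0.
set Rb : R := r + 1.
have [kk [kklt kkmod kksum]] := reindex_shift R hm z0.
have hmR : (0 : R) < m%:R by rewrite ltr0n.
have hb : forall b : 'I_m, nrm2 (G b) <=
    (psi Rb (th + (kk b)%:R) + psi Rb (m%:R - (th + (kk b)%:R))) / 4.
  move=> b; rewrite /G; case: ifP => hG.
    by rewrite /nrm2 /= expr0n /= addr0 divr_ge0 ?addr_ge0 ?psi_ge0.
  move/negbT: hG; rewrite /Gamma' -ltNge -/c => hd.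
  set v := th + (kk b)%:R.
  set q2 := (z0 %/ m)%N; set q1 := ((kk b + b) %/ m)%N; set rho := (z0 %% m)%N.
  have h1 : (z0%:R : R) = q2%:R * m%:R + rho%:R by rewrite -natrM -natrD -divn_eq.
  have h2 : ((kk b)%:R : R) = q1%:R * m%:R + rho%:R - (b : nat)%:R.
    by rewrite -natrM -natrD /rho -(kkmod b) -divn_eq natrD addrK.
  set z : int := (q2%:Z - q1%:Z).
  have ev : c - (b : nat)%:R = v + m%:R * z%:~R.
    rewrite /v /th /z h2 intrB /=.
    have -> : (q2%:Z%:~R : R) = q2%:R by [].
    have -> : (q1%:Z%:~R : R) = q1%:R by [].
    rewrite h1; ring.
  have v0 : 0 <= v by rewrite /v addr_ge0.
  have vm : v <= m%:R.
    have : ((kk b).+1 <= m)%N by exact: kklt.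
    rewrite -(ler_nat R) -natr1 => hk; rewrite /v; lra.
  set M := Num.min v (m%:R - v).
  have dv : distk m (c - (b : nat)%:R) <= v.
    by apply: le_trans (distk_le _ _ z) _; rewrite ev addrK ger0_norm.
  have dmv : distk m (c - (b : nat)%:R) <= m%:R - v.
    apply: le_trans (distk_le _ _ (z + 1)) _.
    rewrite ev intrD mulrDr /= mulr1.
    have -> : v + m%:R * z%:~R - (m%:R * z%:~R + m%:R) = v - m%:R by ring.
    by rewrite ler0_norm ?opprB // subr_le0.
  have RM : Rb < M.
    by apply: lt_le_trans hd _; rewrite le_min dv dmv.
  have M0 : 0 < M by apply: lt_trans RM; rewrite /Rb; lra.
  have Mv : M <= v by rewrite ge_min lexx.
  have Mmv : M <= m%:R - v by rewrite ge_min lexx orbT.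
  apply: le_trans (F_bound (alpha:=alpha) hm (geq_minr n m) ev v0 vm M0 Mv Mmv) _.
  apply: ler_wpM2r; first by [].
  have [vle|vgt] := leP v (m%:R - v).
  - have eM : M = v by rewrite /M min_l.
    rewrite [X in X + _]/psi -eM RM eM.
    by rewrite lerDl psi_ge0.
  - have eM : M = m%:R - v by rewrite /M min_r // ltW.
    rewrite [X in _ + X]/psi -eM RM eM.
    by rewrite lerDr psi_ge0.
apply: le_trans (ler_sum _ (fun b _ => hb b)) _.
rewrite (kksum (fun k => (psi Rb (th + k%:R) + psi Rb (m%:R - (th + k%:R))) / 4)).
rewrite -big_distrl /= big_split /=.
have e2 : \sum_(k < m) psi Rb (m%:R - (th + k%:R)) = \sum_(k < m) psi Rb ((1 - th) + k%:R).
  rewrite (reindex_inj rev_ord_inj) /=; apply: eq_bigr => k _.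
  congr psi; rewrite natrB // -natr1; ring.
rewrite e2.
have hR : 1/2 < Rb by rewrite /Rb; lra.
have s1 := psi_sum m hR th.
have s2 := psi_sum m hR (1 - th).
rewrite (max_r (x := th)) in s1; last by rewrite /Rb; lra.
rewrite (max_r (x := 1 - th)) in s2; last by rewrite /Rb; lra.
apply: le_trans (ler_wpM2r _ (lerD s1 s2)) _; first by [].
rewrite /Rb /r.
have -> : ((1 / (2 * eps) + 1 - 1 / 2)^-1 + (1 / (2 * eps) + 1 - 1 / 2)^-1) / 4
   = eps / (1 + eps).
  field; apply/andP; split; apply: lt0r_neq0; lra.
rewrite ler_pdivrMr; last lra.
by rewrite mulrDr mulr1 lerDl mulr_ge0 // ltW.
Qed.


End H.

Theorem proposition4p1 (R : realType) (m n : nat) (eps : R)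
  (hm : (0 < m)%N) (heps : 0 < eps) (alpha : 'I_n) :
  let f : nat -> R[i] := fun x => chi R n alpha x in
  let l := minn n m in
  let g : 'I_m -> R[i] := fun x => if (x < l)%N then f x else 0 in
  let r : R := 1 / (2 * eps) in
  let Gamma' : pred 'I_m := fun beta =>
    distk m (m%:R / n%:R * (alpha : nat)%:R - (beta : nat)%:R) <= r + 1 in
  norm2sq (fun x => g x - restrG g Gamma' x) <= eps%:C.
Proof. exact: H.main_prop. Qed.
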